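(* Let $n\ge1$, let $G^\star=([n],E^\star)$ be a directed graph (directed cycles allowed), and let $S_1=\operatorname{argmin}_{(\mathcal P,\pi)\in\mathcal S}|E^{(1)}_{(\mathcal P,\pi)}|$. Then (i) the partially ordered partition associated with $G^\star$ belongs to $S_1$, and (ii) for every $(\mathcal P,\pi)\in S_1$, $E^{(1)}_{(\mathcal P,\pi)}$ equals the set of ordered pairs $(a,b)\in[n]^2$ such that $a$ and $b$ are $p$-adjacent in $G^\star$.
   Context: $[n]=\{1,\dots,n\}$. The observed distribution is Markov and faithful to $G^\star$; for distinct $a,b$ and $Z\subseteq[n]\setminus\{a,b\}$, $a\perp\!\!\!\perp b\mid Z$ means $a$ and $b$ are $d$-separated given $Z$ in $G^\star$, and $a\not\perp\!\!\!\perp b\mid Z$ is its negation. In a directed graph, $a$ is an ancestor of $b$ if $a=b$ or there is a directed path from $a$ to $b$. Distinct vertices $a,b$ are $p$-adjacent in a directed graph $G$ if there is an edge between them (in either direction), or $a$ and $b$ have a common child in $G$ which is an ancestor of $a$ or of $b$. $\mathcal S$ is the set of pairs $(\mathcal P,\pi)$ with $\mathcal P$ a partition of $[n]$ and $\pi$ a partial order on $\mathcal P$; $C_1\le_\pi C_2$ iff $(C_1,C_2)\in\pi$; $C_{i,\mathcal P}$ is the block containing $i$; $C\le_\pi\max\{C_1,\dots,C_t\}$ means $C\le_\pi C_i$ for some $i$. The strongly connected components of a directed graph $G$ are the classes of $i\sim j$ iff $i=j$ or there are directed paths $i\to j$ and $j\to i$; on them $C_1\le_G C_2$ iff $C_1=C_2$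 or there is a directed path from a vertex of $C_1$ to a vertex of $C_2$. The partially ordered partition associated with $G$ is (its set of strongly connected components, $\le_G$). For $(\mathcal P,\pi)\in\mathcal S$, $E^{(1)}_{(\mathcal P,\pi)}=\{(a,b)\in[n]^2: a\ne b,\ a\not\perp\!\!\!\perp b\mid\bigcup\{C\in\mathcal P: C\le_\pi\max\{C_{a,\mathcal P},C_{b,\mathcal P}\}\}\setminus\{a,b\}\}$. *)

(* Defs.v *)
From Stdlib Require Import ClassicalDescription.
From mathcomp Require Import all_boot.
Set Implicit Arguments. Unset Strict Implicit. Unset Printing Implicit Defensive.

(* A directed graph on [n] = 'I_n is an edge relation e : rel 'I_n
   (e a b  means  a -> b).  Ancestor: a is an ancestor of b iff connect e a b
   (reflexive-transitive closure, so a is an ancestor of itself). *)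

Definition pbool (P : Prop) : bool :=
  if excluded_middle_informative P then true else false.

Section Defs.
Variable n : nat.
Implicit Types (e : rel 'I_n) (Z : {set 'I_n}) (a b : 'I_n).

Definition ancestor e a b : bool := connect e a b.

(* d-connection (negation of d-separation) in a possibly cyclic directed graph:
   there is a path a = w_0, w_1, ..., w_k = b of pairwise distinct vertices,
   step i being the edge w_i -> w_{i+1} (ds_i = true) or w_{i+1} -> w_i
   (ds_i = false), such that every intermediate vertex that is a collider
   (both adjacent edges point into it) is an ancestor of some vertex of Z,
   and every intermediate non-collider is not in Z. *)
Definition dconnected e Z a b : Prop :=
  exists (t : seq 'I_n) (ds : seq bool),
    let w := a :: t in
    [/\ last a t = b, uniq w, size ds = size t,
        (forall i, i < size t ->
           if nth false ds i then e (nth a w i) (nth a w i.+1)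
           else e (nth a w i.+1) (nth a w i)) &
        (forall i, 0 < i < size t ->
           let v := nth a w i in
           if nth false ds i.-1 && ~~ nth false ds i
           then [exists z in Z, ancestor e v z]
           else v \notin Z)].

Definition dseparated e Z a b : Prop := ~ dconnected e Z a b.

(* (P, pi) in S: P a partition of [n], pi a partial order on P, given as a set
   of pairs (C1,C2) meaning C1 <=_pi C2. *)
Definition is_pop (P : {set {set 'I_n}}) (pi : {set {set 'I_n} * {set 'I_n}}) : Prop :=
  [/\ partition P [set: 'I_n],
      pi \subset setX P P,
      (forall C, C \in P -> (C, C) \in pi),
      (forall C1 C2, (C1, C2) \in pi -> (C2, C1) \in pi -> C1 = C2) &
      (forall C1 C2 C3, (C1, C2) \in pi -> (C2, C3) \in pi -> (C1, C3) \in pi)].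

(* the conditioning set  U{C in P : C <=_pi max{C_a, C_b}} \ {a,b} *)
Definition condset (P : {set {set 'I_n}}) (pi : {set {set 'I_n} * {set 'I_n}}) a b
  : {set 'I_n} :=
  ((\bigcup_(C in P | ((C, pblock P a) \in pi) || ((C, pblock P b) \in pi)) C)
     :\ a) :\ b.

Definition E1 e (P : {set {set 'I_n}}) (pi : {set {set 'I_n} * {set 'I_n}})
  : {set 'I_n * 'I_n} :=
  [set ab | (ab.1 != ab.2) && pbool (~ dseparated e (condset P pi ab.1 ab.2) ab.1 ab.2)].

Definition in_S1 e P pi : Prop :=
  is_pop P pi /\
  forall P' pi', is_pop P' pi' -> #|E1 e P pi| <= #|E1 e P' pi'|.

Definition scc_partition e : {set {set 'I_n}} :=
  [set [set j | connect e i j && connect e j i] | i : 'I_n].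

Definition scc_order e : {set {set 'I_n} * {set 'I_n}} :=
  [set CC in setX (scc_partition e) (scc_partition e) |
     (CC.1 == CC.2) || [exists x in CC.1, exists y in CC.2, connect e x y]].

Definition p_adjacent e a b : bool :=
  (a != b) &&
  [|| e a b, e b a |
      [exists c, [&& e a c, e b c & ancestor e c a || ancestor e c b]]].

Definition p_adjacent_pairs e : {set 'I_n * 'I_n} :=
  [set ab | p_adjacent e ab.1 ab.2].

End Defs.

(* Main.v *)
Require Import Defs.
From mathcomp Require Import all_boot.
From Stdlib Require Import Classical ClassicalDescription.
Set Implicit Arguments. Unset Strict Implicit. Unset Printing Implicit Defensive.

Section S.
Variable n : nat.
Variable e : rel 'I_n.
Hypothesis e_irr : irreflexive e.

Lemma dir_conn (Z : {set 'I_n}) a b t (d : bool) :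
  last a t = b -> uniq (a :: t) -> (forall v, v \in a :: t -> v \notin Z) ->
  path (fun x y => if d then e x y else e y x) a t -> dconnected e Z a b.
Proof.
move=> hl hu hZ /(pathP a) hp.
exists t, (nseq (size t) d); split => //; first by rewrite size_nseq.
  move=> i hi; rewrite nth_nseq hi; exact: hp.
move=> i /andP[hi0 hi]; rewrite !nth_nseq hi (leq_ltn_trans (leq_pred i) hi).
rewrite andbN.
apply: hZ; apply: mem_nth => /=; exact: ltnW.
Qed.

Lemma dir_rev (Z : {set 'I_n}) a b s :
  last b s = a -> uniq (b :: s) -> (forall v, v \in b :: s -> v \notin Z) ->
  path e b s -> dconnected e Z a b.
Proof.
move=> hl hu hZ hp.
have eq1 : rev (b :: s) = a :: rev (belast b s).
  by rewrite lastI rev_rcons hl.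
apply: (@dir_conn Z a b (rev (belast b s)) false).
- case: s hl {hu hZ hp eq1} => [|x s] /= hl; first by [].
  rewrite rev_cons last_rcons //.
- by rewrite -eq1 rev_uniq.
- by move=> v; rewrite -eq1 mem_rev; apply: hZ.
- by rewrite -hl rev_path.
Qed.


Lemma child_path (Z : {set 'I_n}) u v c : u != v -> e u c -> e v c -> connect e c v ->
  (forall w, connect e c w -> w \notin Z) -> u \notin Z -> v \notin Z ->
  (exists s, [/\ path e u s, last u s = v, uniq (u :: s) &
                 forall w, w \in u :: s -> w \notin Z]) \/
  (exists s, [/\ path e v s, last v s = u, uniq (v :: s) &
                 forall w, w \in v :: s -> w \notin Z]).
Proof.
move=> huv huc hvc hcv hc huZ hvZ.
have [p' [hp' hu' hv]] : exists p', [/\ path e c p', uniq (c :: p') & last c p' = v].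
  case/connectP: hcv => p hp ->.
  by case: (shortenP hp) => p' hp' hu' _; exists p'.
have hcon := path_connect hp'.
have huc' : u != c by apply: contraTneq huc => ->; rewrite e_irr.
case hin: (u \in c :: p').
  right; move: hin; rewrite inE (negbTE huc') /= => hin.
  move: hp' hu' hcon hv; case/splitPr: hin => p1 p2 hp' hu' hcon hv.
  exists (c :: p1 ++ [:: u]); split.
  - move: hp'; rewrite /= hvc !cat_path /= => /andP[-> /andP[-> _]] //.
  - by rewrite /= last_cat.
  - have : uniq ((c :: p1 ++ [:: u]) ++ p2) by rewrite /= -catA.
    rewrite cat_uniq => /and3P[h1 h2 _].
    rewrite /= -/(uniq (c :: p1 ++ [:: u])) h1 andbT.
    have hvp2 : v \in p2.
      have hv' : last u p2 = v by rewrite -hv last_cat.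
      have := mem_last u p2; rewrite hv' inE => /orP[/eqP E|//].
      by move: huv; rewrite E eqxx.
    by apply: (hasPn h2).
  - move=> w; rewrite inE => /orP[/eqP -> //|hw]; apply: hc; apply: hcon.
    move: hw; rewrite !inE !mem_cat !inE => /orP[->//|/orP[->|->]];
      by rewrite ?orbT.
left; exists (c :: p'); split => //.
- by rewrite /= huc.
- by rewrite /= hin.
- move=> w; rewrite inE => /orP[/eqP -> //|hw]; apply: hc; exact: hcon.
Qed.

Lemma padj_conn (Z : {set 'I_n}) a b : a \notin Z -> b \notin Z ->
  p_adjacent e a b -> dconnected e Z a b.
Proof.
move=> haZ hbZ /andP[hab /or3P[h|h|/existsP[c /and3P[hac hbc hanc]]]].
- apply: (@dir_conn Z a b [:: b] true) => //=; first by rewrite inE hab.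
  + by move=> w; rewrite !inE => /orP[]/eqP->.
  + by rewrite h.
- apply: (@dir_conn Z a b [:: b] false) => //=; first by rewrite inE hab.
  + by move=> w; rewrite !inE => /orP[]/eqP->.
  + by rewrite h.
have hac' : a != c by apply: contraTneq hac => ->; rewrite e_irr.
have hbc' : b != c by apply: contraTneq hbc => ->; rewrite e_irr.
case: (boolP [exists z in Z, connect e c z]) => hz.
  exists [:: c; b], [:: true; false]; split => //.
  - by rewrite /= !inE negb_or hac' hab eq_sym hbc'.
  - by case=> [|[|i]] //=.
  - by case=> [|[|i]] //=.
have hc : forall w, connect e c w -> w \notin Z.
  move=> w hw; apply/negP => wZ; apply: (negP hz); apply/existsP; exists w.
  by rewrite wZ.
case/orP: hanc => hanc.
  case: (@child_path Z b a c) => //; first by rewrite eq_sym.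
    by case=> s [h1 h2 h3 h4]; apply: (dir_rev h2 h3 h4 h1).
  by case=> s [h1 h2 h3 h4]; apply: (@dir_conn Z a b s true).
case: (@child_path Z a b c) => //.
  by case=> s [h1 h2 h3 h4]; apply: (@dir_conn Z a b s true).
by case=> s [h1 h2 h3 h4]; apply: (dir_rev h2 h3 h4 h1).
Qed.


Lemma sep (Z : {set 'I_n}) a b : a != b ->
  (forall z, z \in Z -> connect e z a || connect e z b) ->
  (forall v, v != a -> v != b -> connect e v a || connect e v b -> v \in Z) ->
  dconnected e Z a b -> p_adjacent e a b.
Proof.
move=> hab hZ1 hZ2 [t [ds [hl hu hs hedge hcol]]].
set k := size t in hs hedge hcol.
pose w i := nth a (a :: t) i.
pose An v := connect e v a || connect e v b.
have hb : nth a (a :: t) k = b.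
  by rewrite -hl -[last a t]/(last a (a :: t)) -nth_last.
have step : forall x y, e x y -> An y -> An x.
  move=> x y hxy /orP[h|h]; apply/orP; [left|right];
    exact: connect_trans (connect1 hxy) h.
have F1 : forall i, 0 < i < k -> nth false ds i.-1 && ~~ nth false ds i -> An (w i).
  move=> i hi hc; have := hcol i hi; rewrite hc => /existsP[z /andP[zZ hz]].
  case/orP: (hZ1 z zZ) => h; apply/orP; [left|right]; exact: connect_trans hz h.
have F2 : forall i, 0 < i < k -> ~~ (nth false ds i.-1 && ~~ nth false ds i) -> ~~ An (w i).
  move=> i /andP[hi0 hik] hc; have := hcol i (introT andP (conj hi0 hik)).
  rewrite (negbTE hc) => hwZ; apply/negP => hA; apply: (negP hwZ); apply: hZ2 => //.
  - rewrite /w; have -> : a = nth a (a :: t) 0 by [].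
    rewrite nth_uniq //= ?ltnS ?(ltnW hik) //; by rewrite -lt0n.
  - rewrite -hb.
    rewrite /w nth_uniq //= ?ltnS ?(ltnW hik) //; by rewrite neq_ltn hik.
have Q : forall m i, i < k -> k - i <= m -> nth false ds i -> An (w i.+1).
  elim=> [|m IH] i hik hm hd; first by move: hm; rewrite leqn0 subn_eq0 leqNgt hik.
  case: (ltngtP i.+1 k) => hk.
  - case hd1: (nth false ds i.+1).
      have := hedge i.+1 hk; rewrite hd1 => he; apply: step he _.
      apply: IH => //; by rewrite subnS -subn1 leq_subLR add1n.
    by apply: F1; rewrite ?hk // hd hd1.
  - by move: hk; rewrite ltnNge hik.
  - by rewrite /w hk hb /An connect0 orbT.
have R : forall i, i < k -> ~~ nth false ds i -> An (w i).
  elim=> [|i IH] hik hd; first by rewrite /w /= /An connect0.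
  case hd0: (nth false ds i).
    by apply: F1; rewrite ?hik //= hd0.
  have := hedge i (ltnW hik); rewrite hd0 => he; apply: step he _.
  by apply: IH; rewrite ?(ltnW hik) ?hd0.
have AllAn : forall i, 0 < i < k -> An (w i).
  move=> i /andP[hi0 hik]; case hd: (nth false ds i).
    by apply: step (Q _ _ hik (leqnn _) hd); have := hedge i hik; rewrite hd.
  by apply: R; rewrite ?hd.
have Col : forall i, 0 < i < k -> nth false ds i.-1 && ~~ nth false ds i.
  move=> i hi; apply/negPn/negP => hc; have := F2 i hi hc; by rewrite AllAn.
rewrite /p_adjacent hab /=.
move: hl hu hedge hcol Col AllAn; rewrite /k /w /= {F1 F2 Q R hb}; clear hs k w.
case: t => [|x [|y [|z t']]] /= hl hu hedge hcol Col AllAn.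
- by move: hab; rewrite hl eqxx.
- by have := hedge 0 isT; rewrite hl; case: (nth false ds 0) => ->; rewrite ?orbT.
- have := Col 1 isT; case/andP => h0 h1.
  have := hedge 0 isT; rewrite h0 /= => hax.
  have := hedge 1 isT; rewrite (negbTE h1) /= hl => hbx.
  apply/orP; right; apply/orP; right; apply/existsP; exists x.
  by rewrite hax hbx; apply: (AllAn 1 isT).
- have := Col 1 isT; have := Col 2 isT; rewrite /=.
  by case/andP => -> _ /andP[_].
Qed.


Definition cls i := [set j | connect e i j && connect e j i].
Definition sccR := [rel x y : 'I_n | connect e x y && connect e y x].

Lemma scc_eqp : scc_partition e = equivalence_partition sccR [set: 'I_n].
Proof.
apply/setP => C; apply/imsetP/imsetP; case=> x _ ->; exists x; rewrite ?inE //;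
  by apply/setP => y; rewrite !inE.
Qed.

Lemma scc_part : partition (scc_partition e) [set: 'I_n].
Proof.
rewrite scc_eqp; apply: equivalence_partitionP => x y z _ _ _ /=; split.
  by rewrite connect0.
case/andP=> hxy hyx; apply/idP/idP => /andP[h1 h2]; apply/andP; split.
- exact: connect_trans hyx h1.
- exact: connect_trans h2 hxy.
- exact: connect_trans hxy h1.
- exact: connect_trans h2 hyx.
Qed.

Lemma cls_in i : cls i \in scc_partition e.
Proof. by apply/imsetP; exists i. Qed.

Lemma cls_self i : i \in cls i.
Proof. by rewrite inE connect0. Qed.

Lemma pblock_scc a : pblock (scc_partition e) a = cls a.
Proof.
apply: def_pblock; [by case/and3P: scc_part | exact: cls_in | exact: cls_self].
Qed.

Lemma in_P C : C \in scc_partition e -> exists i, C = cls i.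
Proof. by case/imsetP => i _ ->; exists i. Qed.

Lemma ord_iff i j : ((cls i, cls j) \in scc_order e) = connect e i j.
Proof.
rewrite inE in_setX !cls_in /=; apply/idP/idP.
  case/orP => [/eqP E|/existsP[x /andP[hx /existsP[y /andP[hy hxy]]]]].
    by have := cls_self i; rewrite E inE => /andP[_].
  move: hx hy; rewrite !inE => /andP[hix _] /andP[_ hyj].
  exact: connect_trans hix (connect_trans hxy hyj).
move=> hij; apply/orP; right; apply/existsP; exists i; rewrite cls_self /=.
by apply/existsP; exists j; rewrite cls_self.
Qed.

Lemma cls_eq i j : connect e i j -> connect e j i -> cls i = cls j.
Proof.
move=> hij hji; apply/setP => y; rewrite !inE; apply/idP/idP => /andP[h1 h2];
  apply/andP; split.
- exact: connect_trans hji h1.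
- exact: connect_trans h2 hij.
- exact: connect_trans hij h1.
- exact: connect_trans h2 hji.
Qed.

Lemma pi_inv C1 C2 : (C1, C2) \in scc_order e -> exists i j, C1 = cls i /\ C2 = cls j.
Proof.
rewrite inE in_setX => /andP[/andP[/in_P[i ->] /in_P[j ->]] _].
by exists i, j.
Qed.

Lemma is_pop_scc : is_pop (scc_partition e) (scc_order e).
Proof.
split.
- exact: scc_part.
- by apply/subsetP => -[C1 C2]; rewrite inE => /andP[].
- by move=> C /in_P[i ->]; rewrite ord_iff connect0.
- move=> C1 C2 h1 h2; have [i [j [E1 E2]]] := pi_inv h1.
  by move: h1 h2; rewrite E1 E2 !ord_iff; apply: cls_eq.
- move=> C1 C2 C3 h1 h2; have [i [j [E1 E2]]] := pi_inv h1.
  have [j' [k [E3 E4]]] := pi_inv h2.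
  move: h1 h2; rewrite E1 E2 E4 !ord_iff => h1 h2.
  exact: connect_trans h1 h2.
Qed.

Lemma condset_scc v a b :
  (v \in condset (scc_partition e) (scc_order e) a b) =
  [&& v != b, v != a & connect e v a || connect e v b].
Proof.
rewrite /condset !in_setD1 !pblock_scc; congr [&& _, _ & _].
apply/bigcupP/idP.
  case=> C /andP[/in_P[i ->] hC]; rewrite inE => /andP[_ hvi].
  by case/orP: hC; rewrite ord_iff => h; apply/orP; [left|right];
    apply: connect_trans hvi h.
move=> h; exists (cls v); last exact: cls_self.
by rewrite cls_in !ord_iff.
Qed.


Lemma pboolP (P : Prop) : reflect P (pbool P).
Proof. by rewrite /pbool; case: excluded_middle_informative => h; constructor. Qed.

Lemma padj_sub P pi : p_adjacent_pairs e \subset E1 e P pi.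
Proof.
apply/subsetP => -[a b]; rewrite !inE /= => hp.
have hab : a != b by case/andP: hp.
rewrite hab /=; apply/pboolP => hsep; apply: hsep; apply: padj_conn hp.
- by rewrite /condset !in_setD1 eqxx andbF.
- by rewrite /condset !in_setD1 eqxx.
Qed.

Lemma E1_scc : E1 e (scc_partition e) (scc_order e) = p_adjacent_pairs e.
Proof.
apply/eqP; rewrite eqEsubset padj_sub andbT.
apply/subsetP => -[a b]; rewrite !inE /= => /andP[hab /pboolP hp].
apply: (sep hab _ _ (NNPP _ hp)).
- by move=> z; rewrite condset_scc => /and3P[].
- by move=> v hva hvb hv; rewrite condset_scc hva hvb.
Qed.

End S.

Theorem proposition3p8 (n : nat) (hn : 0 < n) (e : rel 'I_n)
    (e_irr : irreflexive e) :
  in_S1 e (scc_partition e) (scc_order e) /\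
  (forall (P : {set {set 'I_n}}) (pi : {set {set 'I_n} * {set 'I_n}}),
     in_S1 e P pi -> E1 e P pi = p_adjacent_pairs e).
Proof.
split.
  split; first exact: is_pop_scc.
  by move=> P' pi' _; rewrite (E1_scc e_irr); apply: subset_leq_card (padj_sub e_irr _ _).
move=> P pi [_ H].
have := H _ _ (is_pop_scc e); rewrite (E1_scc e_irr) => hle.
by apply/eqP; rewrite eq_sym eqEcard (padj_sub e_irr) hle.
Qed.
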